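(* Let $r\ge 1$ and let $M=(v_1,\dots,v_n)$ be a finite list (repetitions allowed) of nonzero vectors of $\mathbb{F}_2^r$ generating $\mathbb{F}_2^r$. Let $c_1(G)$ be the largest invariant factor (the exponent) of the sandpile group $K(G)$ of $G=G(\mathbb{F}_2^r,M)$. Then $$v_2(c_1(G))\le \lfloor \log_2 n\rfloor + r-1.$$
   Context: The Cayley graph $G=G(\mathbb{F}_2^r,M)$ has vertex set $\mathbb{F}_2^r$; its Laplacian $L(G)$ is the $2^r\times 2^r$ integer matrix indexed by $\mathbb{F}_2^r$ with $L(G)_{u,u}=n$ and $L(G)_{u,w}=-\#\{i: u+v_i=w\}$ for $u\neq w$. Then $\operatorname{coker}L(G)\cong \mathbb{Z}\oplus K(G)$ with $K(G)$ finite abelian (the sandpile group). For an integer $x\neq 0$, $v_2(x)$ is the largest $m$ with $2^m\mid x$. *)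

(* Defs.v *)
From mathcomp Require Import all_boot all_order all_algebra.
Set Implicit Arguments.
Unset Strict Implicit.
Unset Printing Implicit Defensive.
Import Order.TTheory GRing.Theory Num.Theory.
Local Open Scope ring_scope.

Notation F2vec r := 'rV['F_2]_r.

Definition cayley_laplacian (r n : nat) (v : 'I_n -> F2vec r)
    (u w : F2vec r) : int :=
  if u == w then (n%:Z)
  else - ((#|[set i : 'I_n | u + v i == w]|)%:Z).

Definition in_laplacian_image (r n : nat) (v : 'I_n -> F2vec r)
    (x : F2vec r -> int) : Prop :=
  exists y : F2vec r -> int,
    forall u, x u = \sum_(w : F2vec r) cayley_laplacian v u w * y w.

(* the class of x in coker L(G) is a torsion element, i.e. lies in K(G) *)
Definition coker_torsion (r n : nat) (v : 'I_n -> F2vec r)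
    (x : F2vec r -> int) : Prop :=
  exists k : nat, (0 < k)%N /\ in_laplacian_image v (fun u => k%:Z * x u).

Definition kills_sandpile (r n : nat) (v : 'I_n -> F2vec r) (c : nat) : Prop :=
  forall x, coker_torsion v x -> in_laplacian_image v (fun u => c%:Z * x u).

(* c is the exponent (= largest invariant factor) of K(G) *)
Definition sandpile_exponent (r n : nat) (v : 'I_n -> F2vec r) (c : nat) : Prop :=
  [/\ (0 < c)%N, kills_sandpile v c
    & forall c', (0 < c')%N -> kills_sandpile v c' -> (c <= c')%N].

(* Main.v *)
Require Import Defs.
From Stdlib Require Import Classical.
From mathcomp Require Import all_boot all_order all_algebra.
From mathcomp Require Import ring zify.
Set Implicit Arguments.
Unset Strict Implicit.
Import GRing.Theory Num.Theory.
Local Open Scope ring_scope.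
Lemma F2cases (x : 'F_2) : x = 0 \/ x = 1.
Proof. case: x => [[|[|m]]] //= H. left; exact/val_inj. right; exact/val_inj. Qed.

Definition dot {r} (a u : 'rV['F_2]_r) : 'F_2 := (a *m u^T) 0 0.
Definition ee {r} (a u : 'rV['F_2]_r) : int := (dot a u != 0)%:R.

Lemma dotDr r (a u w : 'rV['F_2]_r) : dot a (u + w) = dot a u + dot a w.
Proof. by rewrite /dot raddfD /= mulmxDr mxE. Qed.
Lemma dotDl r (a b u : 'rV['F_2]_r) : dot (a + b) u = dot a u + dot b u.
Proof. by rewrite /dot mulmxDl mxE. Qed.
Lemma dotNr r (a u : 'rV['F_2]_r) : dot a (- u) = - dot a u.
Proof. by rewrite /dot raddfN /= mulmxN mxE. Qed.
Lemma dot0l r (u : 'rV['F_2]_r) : dot 0 u = 0.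
Proof. by rewrite /dot mul0mx mxE. Qed.
Lemma dotC r (a u : 'rV['F_2]_r) : dot a u = dot u a.
Proof.
rewrite /dot; have -> : u *m a^T = (a *m u^T)^T by rewrite trmx_mul trmxK.
by rewrite [RHS]mxE.
Qed.
Lemma F2_e (x y : 'F_2) :
  ((x + y != 0)%:R : int) = (x != 0)%:R + (y != 0)%:R - 2 * (x != 0)%:R * (y != 0)%:R.
Proof. by case: (F2cases x) => ->; case: (F2cases y) => ->. Qed.
Lemma eeDr r (a u w : 'rV['F_2]_r) : ee a (u + w) = ee a u + ee a w - 2 * ee a u * ee a w.
Proof. by rewrite /ee dotDr F2_e. Qed.
Lemma eeDl r (a b u : 'rV['F_2]_r) : ee (a + b) u = ee a u + ee b u - 2 * ee a u * ee b u.
Proof. by rewrite /ee dotDl F2_e. Qed.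
Lemma eeNr r (a u : 'rV['F_2]_r) : ee a (- u) = ee a u.
Proof. by rewrite /ee dotNr oppr_eq0. Qed.
Lemma ee0l r (u : 'rV['F_2]_r) : ee 0 u = 0.
Proof. by rewrite /ee dot0l eqxx. Qed.
Lemma ee01 r (a u : 'rV['F_2]_r) : ee a u * ee a u = ee a u.
Proof. by rewrite /ee; case: (_ != _). Qed.

Lemma exists_dot r (u : 'rV['F_2]_r) : u != 0 -> exists b, dot b u = 1.
Proof.
move=> nz.
have [j hj] : exists j, u 0 j != 0.
  apply/existsP; apply: contraR nz => /existsPn H; apply/eqP/rowP => j.
  rewrite mxE; exact/eqP/negbNE/H.
exists (delta_mx 0 j); rewrite /dot -rowE !mxE.
by case: (F2cases (u 0 j)) hj => ->; rewrite ?eqxx.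
Qed.
Lemma ee0r r (a : 'rV['F_2]_r) : ee a 0 = 0.
Proof. by rewrite /ee dotC dot0l eqxx. Qed.

Lemma sum_s r (u : 'rV['F_2]_r) :
  \sum_a (1 - 2 * ee a u) = (u == 0)%:R * 2 ^+ r.
Proof.
have [->|nz] := eqVneq u 0.
  under eq_bigr do rewrite ee0r mulr0 subr0.
  rewrite sumr_const card_mx card_Fp // mul1n mul1r.
  by rewrite -natrX.
have [b hb] := exists_dot nz.
set S := \sum_a _.
have HS : S = - S.
  rewrite {1}/S (reindex_inj (addIr b)) /= -sumrN; apply: eq_bigr => a _.
  have eb : ee b u = 1 by rewrite /ee hb oner_eq0.
  rewrite eeDl eb; ring.
rewrite mul0r; clearbody S; lia.
Qed.

Lemma sum_G r (w u : 'rV['F_2]_r) : (0 < r)%N ->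
  \sum_a ee a w * (1 - 2 * ee a u) = 2 ^+ r.-1 * ((u == 0)%:R - (w == u)%:R).
Proof.
move=> r0.
have H2 : 2 * \sum_a ee a w * (1 - 2 * ee a u) =
   \sum_a (1 - 2 * ee a u) - \sum_a (1 - 2 * ee a (w - u)).
  rewrite mulr_sumr -sumrB; apply: eq_bigr => a _; rewrite eeDr eeNr; ring.
rewrite !sum_s subr_eq0 in H2.
apply: (@mulfI _ 2) => //; rewrite H2.
have -> : (2 : int) ^+ r = 2 * 2 ^+ r.-1 by rewrite -exprS prednK.
ring.
Qed.

Lemma card_sum (T : finType) (P : pred T) :
  ((#|[set i | P i]|)%:Z) = \sum_i (P i)%:R :> int.
Proof.
rewrite -sum1_card -natz natr_sum big_mkcond; apply: eq_bigr => i _.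
by rewrite inE; case: (P i).
Qed.

Lemma Lap_apply r n (v : 'I_n -> 'rV['F_2]_r) (hv : forall i, v i != 0)
   (g : 'rV['F_2]_r -> int) u :
  \sum_w cayley_laplacian v u w * g w = n%:Z * g u - \sum_i g (u + v i).
Proof.
have E : \sum_i g (u + v i) =
   \sum_(w | w != u) (#|[set i | u + v i == w]|)%:Z * g w.
  transitivity (\sum_w (#|[set i | u + v i == w]|)%:Z * g w).
    rewrite (eq_bigr (fun i => \sum_w (u + v i == w)%:R * g w)); last first.
      move=> i _; rewrite (bigD1 (u + v i)) //= eqxx mul1r big1 ?addr0 //.
      by move=> w; rewrite eq_sym => /negPf ->; rewrite mul0r.
    rewrite exchange_big; apply: eq_bigr => w _; rewrite -mulr_suml card_sum.
    done.
  rewrite (bigD1 u) //=.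
  have -> : #|[set i | u + v i == u]| = 0%N.
    apply/eqP; rewrite cards_eq0; apply/eqP/setP => i.
    by rewrite !inE -{2}[u]addr0 (inj_eq (addrI u)) (negbTE (hv i)).
  by rewrite mul0r add0r.
rewrite E (bigD1 u) //= {1}/cayley_laplacian eqxx; congr (_ + _).
rewrite -sumrN; apply: eq_bigr => w wu.
by rewrite /cayley_laplacian eq_sym (negbTE wu) mulNr.
Qed.

Lemma sum_Lap r n (v : 'I_n -> 'rV['F_2]_r) (hv : forall i, v i != 0)
   (y : 'rV['F_2]_r -> int) :
  \sum_u \sum_w cayley_laplacian v u w * y w = 0.
Proof.
under eq_bigr do rewrite Lap_apply //.
rewrite sumrB exchange_big /=.
have sh i : \sum_u y (u + v i) = \sum_u y u.
  by rewrite (reindex_inj (addIr (- v i))) /=; apply: eq_bigr => u _; rewrite subrK.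
under [X in _ - X]eq_bigr => i _ do rewrite sh.
by rewrite -mulr_sumr sumr_const card_ord -mulr_natl natz subrr.
Qed.

Definition kn r n (v : 'I_n -> 'rV['F_2]_r) (a : 'rV['F_2]_r) : nat :=
  \sum_i (dot a (v i) != 0%R : nat).

Lemma eigen r n (v : 'I_n -> 'rV['F_2]_r) a u :
  n%:Z * (1 - ee a u) - \sum_i (1 - ee a (u + v i)) = (kn v a)%:Z * (1 - 2 * ee a u).
Proof.
have -> : (kn v a)%:Z = \sum_i ee a (v i) by rewrite /kn -natz natr_sum.
under eq_bigr do rewrite eeDr.
have -> : \sum_i (1 - (ee a u + ee a (v i) - 2 * ee a u * ee a (v i))) =
   \sum_i ((1 - ee a u) - (1 - 2 * ee a u) * ee a (v i)).
  by apply: eq_bigr => i _; ring.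
rewrite sumrB sumr_const card_ord -mulr_sumr -mulr_natl natz; ring.
Qed.

Lemma kn_nz r n (v : 'I_n -> 'rV['F_2]_r) :
  row_full (\matrix_(i < n) v i) -> forall a, a != 0 -> kn v a != 0%N.
Proof.
move=> /row_fullP [B hB] a; apply: contraNN => /eqP k0.
have hd i : dot a (v i) = 0.
  have : ((dot a (v i) != 0%R : nat) <= kn v a)%N.
    by rewrite /kn (bigD1 i) //= leq_addr.
  rewrite k0; by case: (dot a (v i) == 0%R) / eqP.
have H : \matrix_(i < n) v i *m a^T = 0.
  apply/matrixP => i j; rewrite ord1 !mxE -[RHS](hd i) dotC /dot mxE.
  by apply: eq_bigr => k _; rewrite !mxE.
have : a^T = 0 by rewrite -[a^T]mul1mx -hB -mulmxA H mulmx0.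
by move/(congr1 trmx); rewrite trmxK trmx0 => ->.
Qed.

Lemma kill_main r n (v : 'I_n -> 'rV['F_2]_r) (l : nat) :
  (0 < r)%N -> (forall i, v i != 0) ->
  (forall a, a != 0 -> kn v a != 0%N) ->
  (forall a, a != 0 -> (kn v a %| l)%N) ->
  forall x : 'rV['F_2]_r -> int, \sum_u x u = 0 ->
  in_laplacian_image v (fun u => ((2 ^ r.-1 * l)%N)%:Z * x u).
Proof.
move=> r0 hv hk hdiv x sx.
pose q a : int := (l %/ kn v a)%N%:Z.
pose Y a := \sum_u ee a u * x u.
pose F a w := q a * Y a * (1 - ee a w).
exists (fun w => - \sum_a F a w) => u.
rewrite Lap_apply //.
have step1 : n%:Z * - (\sum_a F a u) - \sum_i - (\sum_a F a (u + v i)) =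
   - \sum_a q a * Y a * (n%:Z * (1 - ee a u) - \sum_i (1 - ee a (u + v i))).
  rewrite sumrN opprK mulrN mulr_sumr exchange_big /= -[RHS]sumrN -sumrN -big_split /=.
  apply: eq_bigr => a _; rewrite /F.
  have -> : \sum_(i<n) q a * Y a * (1 - ee a (u + v i)) = q a * Y a * \sum_(i<n) (1 - ee a (u + v i)) by rewrite [RHS]mulr_sumr.
  set S := \sum_(i < n) _; ring.
rewrite step1.
under eq_bigr do rewrite eigen.
have step2 a : q a * Y a * ((kn v a)%:Z * (1 - 2 * ee a u)) = l%:Z * Y a * (1 - 2 * ee a u).
  have [->|nz] := eqVneq a 0.
    by rewrite /Y; under eq_bigr do rewrite ee0l mul0r; rewrite big1 // !(mulr0, mul0r).
  have : q a * (kn v a)%:Z = l%:Z by rewrite /q -PoszM divnK // hdiv.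
  by move=> E; rewrite -E; ring.
under eq_bigr do rewrite step2.
have step3 : \sum_a l%:Z * Y a * (1 - 2 * ee a u) =
   l%:Z * \sum_w x w * \sum_a ee a w * (1 - 2 * ee a u).
  have -> : \sum_a l%:Z * Y a * (1 - 2 * ee a u) = l%:Z * \sum_a Y a * (1 - 2 * ee a u).
    by rewrite [RHS]mulr_sumr; apply: eq_bigr => a _; rewrite mulrA.
  congr (_ * _).
  under eq_bigr do rewrite /Y mulr_suml.
  rewrite exchange_big /=; apply: eq_bigr => w _; rewrite [RHS]mulr_sumr.
  by apply: eq_bigr => a _; ring.
rewrite step3.
under eq_bigr do rewrite sum_G //.
have step4 : \sum_w x w * (2 ^+ r.-1 * ((u == 0)%:R - (w == u)%:R)) =
   2 ^+ r.-1 * ((u == 0)%:R * \sum_w x w - x u).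
  transitivity (\sum_w (2 ^+ r.-1 * (u == 0)%:R * x w - 2 ^+ r.-1 * ((w == u)%:R * x w))).
    by apply: eq_bigr => w _; ring.
  rewrite sumrB -!mulr_sumr [\sum_i (i == u)%:R * x i](bigD1 u) //= eqxx mul1r [\sum_(i | i != u) _]big1 ?addr0; first by ring.
  by move=> w /negPf ->; rewrite mul0r.
rewrite step4 sx mulr0 sub0r PoszM.
have e2 : ((2 ^ r.-1)%N : int) = 2 ^+ r.-1 by rewrite -natz natrX.
rewrite e2; ring.
Qed.

Lemma min_ex (P : nat -> Prop) N : P N -> exists m, P m /\ forall c, P c -> (m <= c)%N.
Proof.
elim/ltn_ind: N => N IH PN.
case: (classic (exists c, (c < N)%N /\ P c)) => [[c [cN Pc]]|H].
  exact: IH c cN Pc.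
exists N; split=> // c Pc; rewrite leqNgt; apply/negP => cN; apply: H; by exists c.
Qed.

Lemma img_comb r n (v : 'I_n -> 'rV['F_2]_r) (f g : 'rV['F_2]_r -> int) (a b : int) :
  in_laplacian_image v f -> in_laplacian_image v g ->
  in_laplacian_image v (fun u => a * f u + b * g u).
Proof.
move=> [y1 h1] [y2 h2]; exists (fun w => a * y1 w + b * y2 w) => u.
rewrite h1 h2 !mulr_sumr -big_split /=; apply: eq_bigr => w _; ring.
Qed.

Lemma kills_gcd r n (v : 'I_n -> 'rV['F_2]_r) c1 c2 :
  kills_sandpile v c1 -> kills_sandpile v c2 -> kills_sandpile v (gcdn c1 c2).
Proof.
move=> k1 k2 x tx.
have [u [w E]] := Bezoutz c1%:Z c2%:Z.
have [y hy] := img_comb u w (k1 x tx) (k2 x tx).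
exists y => u0; rewrite -hy.
have -> : (gcdn c1 c2)%:Z = gcdz c1%:Z c2%:Z by [].
rewrite -E; ring.
Qed.

Lemma torsion_sum r n (v : 'I_n -> 'rV['F_2]_r) (hv : forall i, v i != 0) x :
  coker_torsion v x -> \sum_u x u = 0.
Proof.
move=> [k [k0 [y hy]]].
have : \sum_u k%:Z * x u = 0.
  rewrite (eq_bigr _ (fun u _ => hy u)); exact: sum_Lap.
rewrite -mulr_sumr => /eqP; rewrite mulf_eq0 => /orP [|/eqP //].
by rewrite eqz_nat => /eqP k00; rewrite k00 in k0.
Qed.

Lemma kn_le r n (v : 'I_n -> 'rV['F_2]_r) a : (kn v a <= n)%N.
Proof.
rewrite /kn -[X in (_ <= X)%N]card_ord -sum1_card; apply: leq_sum => i _; exact: leq_b1.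
Qed.

Lemma dvd_l n k : (0 < k <= n)%N -> (k %| 2 ^ trunc_log 2 n * (n`!)`_(2^'))%N.
Proof.
move=> /andP [k0 kn].
rewrite -(partnC 2%N k0); apply: dvdn_mul; last first.
  by apply: partn_dvd; [exact: fact_gt0 | apply: dvdn_fact; rewrite k0].
rewrite p_part dvdn_exp2l //.
apply: leq_trans (leq_trunc_log 2%N kn).
apply: trunc_log_max => //.
by apply: dvdn_leq => //; rewrite -p_part dvdn_part.
Qed.

Lemma logn_c0 r n : (logn 2 (2 ^ r * (2 ^ trunc_log 2 n * (n`!)`_(2^'))) = r + trunc_log 2 n)%N.
Proof.
rewrite mulnA -expnD mulnC logn_Gauss ?pfactorK //.
have := coprime_partC 2%N 2%N (n`!).
by rewrite p_part (pfactorK 1).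
Qed.

Unset Implicit Arguments.

Theorem mainTheorem2 (r n : nat) (v : 'I_n -> 'rV['F_2]_r) :
  (1 <= r)%N ->
  (forall i, v i != 0) ->
  row_full (\matrix_(i < n) v i) ->
  exists c : nat, sandpile_exponent v c /\
    (logn 2 c <= trunc_log 2 n + r - 1)%N.
Proof.
move=> r1 hv hfull.
set l := (2 ^ trunc_log 2 n * (n`!)`_(2^'))%N.
set c0 := (2 ^ r.-1 * l)%N.
have c0pos : (0 < c0)%N by rewrite /c0 /l !muln_gt0 !expn_gt0 part_gt0.
have kill0 : kills_sandpile v c0.
  move=> x tx; apply: kill_main => //.
  - exact: kn_nz.
  - move=> a a0; apply: dvd_l; rewrite kn_le andbT lt0n; exact: kn_nz.
  - exact: torsion_sum tx.
have [c [[cpos ckill] cmin]] :=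
  @min_ex (fun c => (0 < c)%N /\ kills_sandpile v c) c0 (conj c0pos kill0).
exists c; split.
  by split => // c' c'pos kc'; apply: cmin.
have cdiv : (c %| c0)%N.
  have gk := kills_gcd ckill kill0.
  have gpos : (0 < gcdn c c0)%N by rewrite gcdn_gt0 cpos.
  have le1 := cmin _ (conj gpos gk).
  have le2 : (gcdn c c0 <= c)%N by apply: dvdn_leq => //; exact: dvdn_gcdl.
  have -> : c = gcdn c c0 by apply/eqP; rewrite eqn_leq le1 le2.
  exact: dvdn_gcdr.
have := dvdn_leq_log 2 c0pos cdiv.
rewrite /c0 /l logn_c0; lia.
Qed.
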